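(* Let $\gamma\ge 2$ be an integer, $\delta>0$, and let $\mu$ range over an arbitrary parameter set. Let $F(\rho,\mu)$ be complex valued with $F(\cdot,\mu)\in C^{\gamma+1}([0,\delta))$ for each $\mu$, and set $a_j(\mu)=\partial_\rho^jF(0,\mu)/j!$. Assume (F1) $a_0(\mu)=a_1(\mu)=0$ for all $\mu$; (F2) there is $C>0$ with $\sum_{j=2}^{\gamma}|a_j(\mu)|\ge C$ for all $\mu$; (F3) for each $\mu$, $|\partial_\rho F(\rho,\mu)|$ is increasing in $\rho$ for $0<\rho<\delta$; (F4) for each $k\le\gamma+1$, $\partial_\rho^kF(\rho,\mu)$ is bounded uniformly in $0<\rho<\delta$ and $\mu$. Then, provided $\delta$ is sufficiently small (depending only on $\gamma$ and the constants in (F2), (F4)), there exist constants $C>0$ and $C_m>0$ such that for all $0<\rho<\delta$, all $\mu$, and all integers $1\le m\le\gamma+1$, $$|\partial_\rho F(\rho,\mu)|\ge C\rho^{\gamma-1}\qquad\text{and}\qquad |\partial_\rho^mF(\rho,\mu)|\le C_m\rho^{1-m}|\partial_\rho F(\rho,\mu)|.$$ *)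

(* Defs.v *)
From Stdlib Require Import Reals Arith.
Open Scope R_scope.

(* A complex number is represented by its real and imaginary parts;
   its modulus is sqrt (re^2 + im^2). *)
Definition cmod (re im : R) : R := sqrt (re * re + im * im).

Definition has_rderiv (f : R -> R) (x l : R) : Prop :=
  forall eps : R, 0 < eps -> exists d : R, 0 < d /\
    forall h : R, 0 < h < d -> Rabs ((f (x + h) - f x) / h - l) < eps.

Definition cont_on_0d (f : R -> R) (delta : R) : Prop :=
  forall x : R, 0 <= x < delta -> forall eps : R, 0 < eps ->
    exists d : R, 0 < d /\ forall y : R, 0 <= y < delta -> Rabs (y - x) < d ->
      Rabs (f y - f x) < eps.

(* D : nat -> R -> R is the list of derivatives of the real function D 0,
   which is C^n on [0, delta): for k < n, D (k+1) is the derivative of D k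
   on (0, delta) and the right derivative at 0; D n is continuous on [0, delta). *)
Definition Cn_on_0d (n : nat) (delta : R) (D : nat -> R -> R) : Prop :=
  (forall k : nat, (k < n)%nat ->
     (forall x : R, 0 < x < delta -> derivable_pt_lim (D k) x (D (S k) x)) /\
     has_rderiv (D k) 0 (D (S k) 0)) /\
  cont_on_0d (D n) delta.

(* Main.v *)
Require Import Defs.
From Stdlib Require Import Reals Arith Lra Lia.
Open Scope R_scope.

Lemma sq_abs (a : R) : a * a = Rabs a * Rabs a.
Proof. rewrite <- Rabs_mult. rewrite Rabs_pos_eq; [lra|]. nra. Qed.

Lemma cmod_re a b : Rabs a <= cmod a b.
Proof.
  unfold cmod. rewrite <- (sqrt_Rsqr (Rabs a)) by apply Rabs_pos.
  apply sqrt_le_1_alt. unfold Rsqr. rewrite <- sq_abs. nra.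
Qed.

Lemma cmod_im a b : Rabs b <= cmod a b.
Proof.
  unfold cmod. rewrite <- (sqrt_Rsqr (Rabs b)) by apply Rabs_pos.
  apply sqrt_le_1_alt. unfold Rsqr. rewrite <- sq_abs. nra.
Qed.

Lemma cmod_le a b : cmod a b <= Rabs a + Rabs b.
Proof.
  unfold cmod. rewrite <- (sqrt_Rsqr (Rabs a + Rabs b)).
  2:{ pose proof (Rabs_pos a); pose proof (Rabs_pos b); lra. }
  apply sqrt_le_1_alt. unfold Rsqr. rewrite (sq_abs a), (sq_abs b).
  pose proof (Rabs_pos a); pose proof (Rabs_pos b); nra.
Qed.

Lemma cmod_pos a b : 0 <= cmod a b.
Proof. unfold cmod; apply sqrt_pos. Qed.

Fixpoint SumN (w : nat -> R) (n : nat) : R :=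
  match n with O => 0 | S n' => SumN w n' + w n' end.

Definition Pol (c : nat -> R) (n : nat) (t : R) : R := SumN (fun i => c i * t ^ i) n.

Lemma SumN_le w1 w2 n : (forall i, (i < n)%nat -> w1 i <= w2 i) -> SumN w1 n <= SumN w2 n.
Proof.
  induction n; simpl; intros H. lra.
  assert (w1 n <= w2 n) by (apply H; lia).
  assert (SumN w1 n <= SumN w2 n) by (apply IHn; intros; apply H; lia). lra.
Qed.

Lemma SumN_abs w n : Rabs (SumN w n) <= SumN (fun i => Rabs (w i)) n.
Proof.
  induction n; simpl. rewrite Rabs_R0; lra.
  eapply Rle_trans. apply Rabs_triang. lra.
Qed.

Lemma SumN_plus w1 w2 n : SumN (fun i => w1 i + w2 i) n = SumN w1 n + SumN w2 n.
Proof. induction n; simpl; lra. Qed.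

Lemma SumN_nonneg w n : (forall i, (i < n)%nat -> 0 <= w i) -> 0 <= SumN w n.
Proof.
  induction n; simpl; intros H. lra.
  assert (0 <= w n) by (apply H; lia).
  assert (0 <= SumN w n) by (apply IHn; intros; apply H; lia). lra.
Qed.

Lemma SumN_bound w n X : (forall i, (i < n)%nat -> w i <= X) -> SumN w n <= INR n * X.
Proof.
  induction n; intros H. simpl; lra.
  assert (w n <= X) by (apply H; lia).
  assert (SumN w n <= INR n * X) by (apply IHn; intros; apply H; lia).
  rewrite S_INR. simpl SumN. lra.
Qed.

Lemma SumN_term w n i : (forall j, (j < n)%nat -> 0 <= w j) -> (i < n)%nat -> w i <= SumN w n.
Proof.
  induction n; simpl; intros H Hi. lia.
  destruct (Nat.eq_dec i n) as [->|Hne].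
  - assert (0 <= SumN w n) by (apply SumN_nonneg; intros; apply H; lia). lra.
  - assert (w i <= SumN w n) by (apply IHn; [intros; apply H; lia | lia]).
    assert (0 <= w n) by (apply H; lia). lra.
Qed.

Lemma pow_le_one x n : 0 <= x <= 1 -> x ^ n <= 1.
Proof. intros Hx. induction n; simpl. lra.
  assert (0 <= x ^ n) by (apply pow_le; lra). nra. Qed.

Lemma pow_le_small x i j : 0 <= x <= 1 -> (i <= j)%nat -> x ^ j <= x ^ i.
Proof.
  intros Hx Hij. replace j with (i + (j - i))%nat by lia. rewrite pow_add.
  assert (0 <= x ^ i) by (apply pow_le; lra).
  assert (x ^ (j - i) <= 1) by (apply pow_le_one; lra). nra.
Qed.

Fixpoint Kc (n : nat) : R := match n with O => 0 | S n' => 1 + 2 * Kc n' * (1 + 2 ^ n') end.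

Lemma Kc_nonneg n : 0 <= Kc n.
Proof. induction n; simpl. lra. assert (0 < 2 ^ n) by (apply pow_lt; lra). nra. Qed.

Lemma Kc_ge1 n : (1 <= n)%nat -> 1 <= Kc n.
Proof. destruct n. lia. intros _. simpl. pose proof (Kc_nonneg n).
  assert (0 < 2 ^ n) by (apply pow_lt; lra). nra. Qed.

Lemma Pol_half c k n t :
  Pol c n t - 2 ^ k * Pol c n (t / 2) = Pol (fun i => c i * (1 - 2 ^ k / 2 ^ i)) n t.
Proof.
  unfold Pol. induction n; simpl SumN. ring.
  rewrite <- IHn. unfold Rdiv. rewrite Rpow_mult_distr, pow_inv.
  assert (2 ^ n <> 0) by (apply pow_nonzero; lra). field. auto.
Qed.

Lemma Pol_scale c n r t : Pol c n (r * t) = Pol (fun i => c i * r ^ i) n t.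
Proof. unfold Pol. induction n; simpl SumN. ring. rewrite IHn, Rpow_mult_distr. ring. Qed.

Lemma Pol_abs c n t : Rabs (Pol c n t) <= SumN (fun i => Rabs (c i * t ^ i)) n.
Proof. apply SumN_abs. Qed.

Lemma poly_bound n : forall c M, (forall t, 0 < t <= 1 -> Rabs (Pol c n t) <= M) ->
  SumN (fun i => Rabs (c i)) n <= Kc n * M.
Proof.
  induction n; intros c M H.
  - simpl. assert (0 <= M). { eapply Rle_trans. apply Rabs_pos. apply (H 1). lra. } nra.
  - assert (HM : 0 <= M). { eapply Rle_trans. apply Rabs_pos. apply (H 1). lra. }
    set (c' := fun i => c i * (1 - 2 ^ n / 2 ^ i)).
    assert (Hc' : forall t, 0 < t <= 1 -> Rabs (Pol c' n t) <= M * (1 + 2 ^ n)).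
    { intros t Ht.
      assert (E : Pol c' n t = Pol c' (S n) t).
      { unfold Pol. simpl SumN. unfold c'.
        assert (2 ^ n <> 0) by (apply pow_nonzero; lra).
        replace (2 ^ n / 2 ^ n) with 1 by (field; auto). ring. }
      rewrite E. unfold c'. rewrite <- Pol_half.
      eapply Rle_trans. apply Rabs_triang. rewrite Rabs_Ropp, Rabs_mult.
      rewrite (Rabs_pos_eq (2 ^ n)) by (apply pow_le; lra).
      assert (Rabs (Pol c (S n) t) <= M) by (apply H; lra).
      assert (Rabs (Pol c (S n) (t / 2)) <= M) by (apply H; lra).
      assert (0 < 2 ^ n) by (apply pow_lt; lra). nra. }
    pose proof (IHn c' _ Hc') as IH.
    assert (Hle : SumN (fun i => Rabs (c i)) n <= SumN (fun i => Rabs (c' i)) n).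
    { apply SumN_le. intros i Hi. unfold c'. rewrite Rabs_mult.
      assert (2 * 2 ^ i <= 2 ^ n) by (change (2 * 2 ^ i) with (2 ^ (S i)); apply Rle_pow; [lra|lia]).
      assert (0 < 2 ^ i) by (apply pow_lt; lra).
      assert (2 <= 2 ^ n / 2 ^ i). { apply (Rmult_le_reg_r (2 ^ i)); auto.
        unfold Rdiv. rewrite Rmult_assoc, Rinv_l by lra. lra. }
      rewrite (Rabs_left1 (1 - _)) by lra. pose proof (Rabs_pos (c i)). nra. }
    assert (Hcn : Rabs (c n) <= M + SumN (fun i => Rabs (c i)) n).
    { assert (E : c n = Pol c (S n) 1 - Pol c n 1).
      { unfold Pol. simpl SumN. rewrite pow1. ring. }
      rewrite E. eapply Rle_trans. apply Rabs_triang. rewrite Rabs_Ropp.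
      assert (Rabs (Pol c (S n) 1) <= M) by (apply H; lra).
      assert (Rabs (Pol c n 1) <= SumN (fun i => Rabs (c i)) n).
      { eapply Rle_trans. apply Pol_abs. apply SumN_le. intros i _.
        rewrite pow1, Rmult_1_r. lra. }
      lra. }
    simpl SumN. simpl Kc. pose proof (Kc_nonneg n).
    assert (0 < 2 ^ n) by (apply pow_lt; lra). nra.
Qed.

Definition rcont0 (h : R -> R) := forall eps, 0 < eps ->
  exists d, 0 < d /\ forall y, 0 < y < d -> Rabs (h y - h 0) < eps.

Lemma rderiv_rcont0 f l : has_rderiv f 0 l -> rcont0 f.
Proof.
  intros H eps Heps. destruct (H 1 ltac:(lra)) as [d [Hd Hh]].
  exists (Rmin d (eps / (Rabs l + 1))). split.
  { apply Rmin_pos; auto. apply Rdiv_lt_0_compat; auto. pose proof (Rabs_pos l); lra. }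
  intros y Hy. assert (Hy1 : y < d) by (eapply Rlt_le_trans; [apply Hy| apply Rmin_l]).
  assert (Hy2 : y < eps / (Rabs l + 1)) by (eapply Rlt_le_trans; [apply Hy| apply Rmin_r]).
  specialize (Hh y ltac:(lra)). rewrite Rplus_0_l in Hh.
  assert (Hl : 0 < Rabs l + 1) by (pose proof (Rabs_pos l); lra).
  assert (E : f y - f 0 = y * ((f y - f 0) / y - l) + y * l) by (field; lra).
  rewrite E. eapply Rle_lt_trans. apply Rabs_triang. rewrite !Rabs_mult, Rabs_pos_eq by lra.
  assert (y * Rabs l + y <= eps).
  { apply (Rmult_lt_compat_r (Rabs l + 1)) in Hy2; auto.
    unfold Rdiv in Hy2. rewrite Rmult_assoc, Rinv_l in Hy2 by lra. lra. }
  assert (y * Rabs ((f y - f 0) / y - l) < y * 1) by (apply Rmult_lt_compat_l; lra). lra.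
Qed.

Lemma deriv_rcont0 f l : derivable_pt_lim f 0 l -> rcont0 f.
Proof.
  intros H. assert (Hc : continuity_pt f 0).
  { apply derivable_continuous_pt. exists l. exact H. }
  intros eps Heps. unfold continuity_pt, continue_in, limit1_in, limit_in in Hc.
  destruct (Hc eps Heps) as [a [Ha Hh]]. exists a. split; auto.
  intros y Hy. apply Hh. split. split. exact I. lra. simpl. unfold R_dist.
  rewrite Rminus_0_r, Rabs_pos_eq; lra.
Qed.

Lemma rcont0_minus f g : rcont0 f -> rcont0 g -> rcont0 (fun x => f x - g x).
Proof.
  intros Hf Hg eps Heps. destruct (Hf (eps/2) ltac:(lra)) as [d1 [Hd1 H1]].
  destruct (Hg (eps/2) ltac:(lra)) as [d2 [Hd2 H2]].
  exists (Rmin d1 d2). split. apply Rmin_pos; auto. intros y Hy.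
  assert (y < d1) by (eapply Rlt_le_trans; [apply Hy| apply Rmin_l]).
  assert (y < d2) by (eapply Rlt_le_trans; [apply Hy| apply Rmin_r]).
  specialize (H1 y ltac:(lra)). specialize (H2 y ltac:(lra)).
  replace (f y - g y - (f 0 - g 0)) with ((f y - f 0) - (g y - g 0)) by ring.
  eapply Rle_lt_trans. apply Rabs_triang. rewrite Rabs_Ropp. lra.
Qed.

Lemma Pol_deriv_gen c n x :
  derivable_pt_lim (Pol c n) x (SumN (fun i => c i * (INR i * x ^ pred i)) n).
Proof.
  induction n.
  - change (derivable_pt_lim (fct_cte 0) x 0). apply derivable_pt_lim_const.
  - change (derivable_pt_lim (fun t => Pol c n t + c n * t ^ n) x
      (SumN (fun i => c i * (INR i * x ^ pred i)) n + c n * (INR n * x ^ pred n))).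
    apply (derivable_pt_lim_plus (Pol c n) (mult_real_fct (c n) (fun t => t ^ n))).
    exact IHn. apply derivable_pt_lim_scal. apply derivable_pt_lim_pow.
Qed.

Definition coef (D : nat -> R -> R) (m i : nat) : R := D (m + i)%nat 0 / INR (fact i).

Lemma coef_shift D m n x :
  SumN (fun i => coef D m i * (INR i * x ^ pred i)) (S n) = Pol (coef D (S m)) n x.
Proof.
  unfold Pol. induction n.
  - simpl. ring.
  - change (SumN (fun i => coef D m i * (INR i * x ^ pred i)) (S n) +
      coef D m (S n) * (INR (S n) * x ^ n) = SumN (fun i => coef D (S m) i * x ^ i) n + coef D (S m) n * x ^ n).
    rewrite IHn. unfold coef. rewrite Nat.add_succ_r.
    replace (S m + n)%nat with (S (m + n)) by lia.
    replace (fact (S n)) with (S n * fact n)%nat by reflexivity. rewrite mult_INR.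
    assert (INR (fact n) <> 0) by apply INR_fact_neq_0.
    assert (INR (S n) <> 0) by (apply not_0_INR; lia). field. auto.
Qed.

Lemma Pol_deriv D m n x : derivable_pt_lim (Pol (coef D m) (S n)) x (Pol (coef D (S m)) n x).
Proof. rewrite <- coef_shift. apply Pol_deriv_gen. Qed.

Lemma Pol_at0 c n : Pol c (S n) 0 = c 0%nat.
Proof. unfold Pol. induction n. simpl. ring.
  change (SumN (fun i => c i * 0 ^ i) (S n) + c (S n) * 0 ^ (S n) = c 0%nat).
  rewrite IHn. simpl. ring. Qed.

Lemma growth_bound (h h' : R -> R) (delta c : R) (n : nat) :
  0 <= c ->
  (forall x, 0 < x < delta -> derivable_pt_lim h x (h' x)) ->
  (forall x, 0 < x < delta -> Rabs (h' x) <= c * INR (S n) * x ^ n) ->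
  rcont0 h -> h 0 = 0 ->
  forall rho, 0 < rho < delta -> Rabs (h rho) <= c * rho ^ (S n).
Proof.
  intros Hc Hd Hb Hr H0 rho Hrho. apply Rle_plus_epsilon. intros eta Heta.
  destruct (Hr eta Heta) as [d [Hdp Hh]].
  set (e := Rmin (d/2) (rho/2)).
  assert (He1 : 0 < e) by (apply Rmin_pos; lra).
  assert (He2 : e <= d/2) by apply Rmin_l.
  assert (He3 : e <= rho/2) by apply Rmin_r.
  specialize (Hh e ltac:(lra)). rewrite H0, Rminus_0_r in Hh.
  assert (Hp : 0 <= c * e ^ S n) by (apply Rmult_le_pos; [lra| apply pow_le; lra]).
  destruct (MVT_cor2 (fun x => h x - c * x ^ S n) (fun x => h' x - c * (INR (S n) * x ^ n)) e rho)
    as [z [Hz1 Hz2]]. lra.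
  { intros x Hx. apply (derivable_pt_lim_minus h (mult_real_fct c (fun y => y ^ S n))).
    apply Hd; lra. apply derivable_pt_lim_scal. apply derivable_pt_lim_pow. }
  destruct (MVT_cor2 (fun x => h x + c * x ^ S n) (fun x => h' x + c * (INR (S n) * x ^ n)) e rho)
    as [w [Hw1 Hw2]]. lra.
  { intros x Hx. apply (derivable_pt_lim_plus h (mult_real_fct c (fun y => y ^ S n))).
    apply Hd; lra. apply derivable_pt_lim_scal. apply derivable_pt_lim_pow. }
  assert (Bz := Hb z ltac:(lra)). assert (Bw := Hb w ltac:(lra)).
  assert (Az : h' z <= c * INR (S n) * z ^ n) by (eapply Rle_trans; [apply Rle_abs| exact Bz]).
  assert (Aw : - h' w <= c * INR (S n) * w ^ n) by (eapply Rle_trans; [apply Rle_abs| rewrite Rabs_Ropp; exact Bw]).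
  assert (T1 : (h' z - c * (INR (S n) * z ^ n)) * (rho - e) <= 0) by nra.
  assert (T2 : (h' w + c * (INR (S n) * w ^ n)) * (rho - e) >= 0) by nra.
  assert (Ah : Rabs (h e) < eta) by exact Hh.
  apply Rabs_le. apply Rabs_def2 in Ah. lra.
Qed.

Definition TH (D : nat -> R -> R) (delta Bp : R) (N : nat) : Prop :=
  (forall k, (k < N)%nat -> (forall x, 0 < x < delta -> derivable_pt_lim (D k) x (D (S k) x)) /\ rcont0 (D k)) /\
  (forall x, 0 < x < delta -> Rabs (D N x) <= Bp).

Lemma taylor D delta Bp N : 0 <= Bp -> TH D delta Bp N ->
  forall n m, (m + n = N)%nat -> forall rho, 0 < rho < delta ->
  Rabs (D m rho - Pol (coef D m) n rho) <= Bp * rho ^ n / INR (fact n).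
Proof.
  intros HB [HD HN] n. induction n; intros m Hmn rho Hr.
  - replace m with N by lia. unfold Pol. simpl. rewrite Rminus_0_r.
    replace (Bp * 1 / 1) with Bp by field. apply HN; auto.
  - destruct (HD m ltac:(lia)) as [Hdm Hrm].
    assert (Hf : 0 < INR (fact (S n))) by apply INR_fact_lt_0.
    assert (G := growth_bound (fun x => D m x - Pol (coef D m) (S n) x)
      (fun x => D (S m) x - Pol (coef D (S m)) n x) delta (Bp / INR (fact (S n))) n).
    replace (Bp * rho ^ S n / INR (fact (S n))) with (Bp / INR (fact (S n)) * rho ^ S n) by (field; lra).
    apply G; auto.
    + apply Rmult_le_pos; auto. left; apply Rinv_0_lt_compat; auto.
    + intros x Hx. apply (derivable_pt_lim_minus (D m) (Pol (coef D m) (S n))). apply Hdm; auto.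
      apply Pol_deriv.
    + intros x Hx. eapply Rle_trans. apply (IHn (S m)); auto. lia.
      right. replace (fact (S n)) with (S n * fact n)%nat by reflexivity. rewrite mult_INR.
      assert (INR (fact n) <> 0) by apply INR_fact_neq_0.
      assert (INR (S n) <> 0) by (apply not_0_INR; lia). field. auto.
    + apply rcont0_minus; auto. apply (deriv_rcont0 _ (Pol (coef D (S m)) n 0)). apply Pol_deriv.
    + rewrite Pol_at0. unfold coef. rewrite Nat.add_0_r. simpl. field.
Qed.

Lemma SumN_scal a w n : SumN (fun i => a * w i) n = a * SumN w n.
Proof. induction n; simpl. ring. rewrite IHn. ring. Qed.

Lemma stepa D delta Bp g rho A : 0 <= Bp -> TH D delta Bp (S g) -> 0 < rho < delta ->
  (forall s, 0 < s <= rho -> Rabs (D 1%nat s) <= A) ->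
  forall t, 0 < t <= 1 -> Rabs (Pol (fun i => coef D 1 i * rho ^ i) g t) <= A + Bp / INR (fact g) * rho ^ g.
Proof.
  intros HB HT Hr HA t Ht. rewrite <- Pol_scale.
  assert (Hs : 0 < rho * t <= rho) by (split; nra).
  assert (T := taylor D delta Bp (S g) HB HT g 1 ltac:(lia) (rho * t) ltac:(lra)).
  assert (Hp : (rho * t) ^ g <= rho ^ g) by (apply pow_incr; lra).
  assert (Hf : 0 < INR (fact g)) by apply INR_fact_lt_0.
  assert (Bp * (rho * t) ^ g / INR (fact g) <= Bp / INR (fact g) * rho ^ g).
  { assert (Bp * (rho * t) ^ g <= Bp * rho ^ g) by nra.
    replace (Bp / INR (fact g) * rho ^ g) with (Bp * rho ^ g / INR (fact g)) by (field; lra).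
    unfold Rdiv. apply Rmult_le_compat_r; auto. left; apply Rinv_0_lt_compat; auto. }
  specialize (HA _ Hs).
  replace (Pol (coef D 1) g (rho * t)) with (D 1%nat (rho * t) - (D 1%nat (rho * t) - Pol (coef D 1) g (rho * t))) by ring.
  eapply Rle_trans. apply Rabs_triang. rewrite Rabs_Ropp. lra.
Qed.

Lemma stepf D delta Bp g rho A Kg Cc m : 0 <= Bp -> TH D delta Bp (S g) -> 0 < rho < delta -> rho < 1 ->
  (2 <= g)%nat -> 0 < Cc -> Cc * rho ^ (g - 1) <= A -> 0 <= Kg ->
  (forall j, (j < g)%nat -> Rabs (coef D 1 j) * rho ^ j <= 2 * Kg * A) ->
  (1 <= m <= S g)%nat ->
  Rabs (D m rho) * rho ^ (m - 1) <= (INR (S g) * INR (fact g) * (2 * Kg) + Bp / Cc) * A.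
Proof.
  intros HB HT Hr Hr1 Hg HC HA HK Hj Hm.
  set (m' := (m - 1)%nat). set (n := (S g - m)%nat). set (R' := rho ^ m').
  assert (HR' : 0 < R') by (apply pow_lt; lra).
  assert (HA0 : 0 <= A). { assert (0 <= rho ^ (g - 1)) by (apply pow_le; lra). nra. }
  assert (T := taylor D delta Bp (S g) HB HT n m ltac:(unfold n; lia) rho Hr).
  assert (Hfn : 1 <= INR (fact n)). { change 1 with (INR 1). apply le_INR. pose proof (lt_O_fact n). lia. }
  assert (Hrn : 0 <= rho ^ n) by (apply pow_le; lra).
  assert (H1 : Rabs (D m rho - Pol (coef D m) n rho) <= Bp * rho ^ n).
  { eapply Rle_trans. apply T. unfold Rdiv. assert (0 <= Bp * rho ^ n) by nra.
    assert (/ INR (fact n) <= 1). { rewrite <- Rinv_1. apply Rinv_le_contravar; lra. }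
    nra. }
  assert (H2 : Bp * rho ^ n * R' <= Bp / Cc * A).
  { unfold R'. rewrite Rmult_assoc, <- pow_add.
    assert (rho ^ (n + m') <= rho ^ (g - 1)) by (apply pow_le_small; [lra| unfold n, m'; lia]).
    assert (Bp * rho ^ (n + m') <= Bp * rho ^ (g - 1)) by nra.
    apply (Rmult_le_reg_l Cc); auto. replace (Cc * (Bp / Cc * A)) with (Bp * A) by (field; lra). nra. }
  assert (H3 : forall i, (i < n)%nat -> Rabs (coef D m i * rho ^ i) <= INR (fact g) * (2 * Kg * A) / R').
  { intros i Hi. set (j := (m' + i)%nat).
    assert (E : coef D m i * rho ^ i = coef D 1 j * rho ^ j * (INR (fact j) / INR (fact i)) / R').
    { unfold coef, R', j. replace (m + i)%nat with (1 + (m' + i))%nat by (unfold m'; lia).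
      rewrite pow_add. assert (INR (fact i) <> 0) by apply INR_fact_neq_0.
      assert (INR (fact (m' + i)) <> 0) by apply INR_fact_neq_0.
      assert (rho ^ m' <> 0) by (apply pow_nonzero; lra). field. auto. }
    rewrite E. unfold Rdiv. rewrite !Rabs_mult. rewrite (Rabs_pos_eq (rho ^ j)) by (apply pow_le; lra).
    rewrite (Rabs_pos_eq (INR (fact j))) by (left; apply INR_fact_lt_0).
    rewrite (Rabs_pos_eq (/ INR (fact i))) by (left; apply Rinv_0_lt_compat, INR_fact_lt_0).
    rewrite (Rabs_pos_eq (/ R')) by (left; apply Rinv_0_lt_compat; auto).
    assert (Hjg : (j < g)%nat) by (unfold j, m', n in *; lia).
    specialize (Hj j Hjg).
    assert (Hfi : 1 <= INR (fact i)). { change 1 with (INR 1). apply le_INR. pose proof (lt_O_fact i). lia. }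
    assert (Hfj : INR (fact j) <= INR (fact g)) by (apply le_INR, Factorial.fact_le; lia).
    assert (Hfj0 : 0 < INR (fact j)) by apply INR_fact_lt_0.
    assert (Hii : / INR (fact i) <= 1). { rewrite <- Rinv_1. apply Rinv_le_contravar; lra. }
    assert (Hii0 : 0 < / INR (fact i)) by (apply Rinv_0_lt_compat; lra).
    assert (HR0 : 0 < / R') by (apply Rinv_0_lt_compat; auto).
    assert (Hq : 0 <= Rabs (coef D 1 j) * rho ^ j) by (apply Rmult_le_pos; [apply Rabs_pos| apply pow_le; lra]).
    apply Rmult_le_compat_r; [lra|].
    assert (INR (fact j) * / INR (fact i) <= INR (fact j) * 1) by (apply Rmult_le_compat_l; lra).
    assert (INR (fact j) * / INR (fact i) <= INR (fact g)) by lra.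
    assert (0 <= INR (fact j) * / INR (fact i)) by nra.
    replace (Rabs (coef D 1 j) * rho ^ j * (INR (fact j) * / INR (fact i)))
      with ((Rabs (coef D 1 j) * rho ^ j) * (INR (fact j) * / INR (fact i))) by ring.
    assert (0 <= 2 * Kg * A) by nra. nra. }
  assert (H4 : Rabs (Pol (coef D m) n rho) * R' <= INR (S g) * INR (fact g) * (2 * Kg) * A).
  { assert (S1 := SumN_bound _ _ _ H3).
    assert (S2 := Pol_abs (coef D m) n rho).
    assert (Hn : INR n <= INR (S g)) by (apply le_INR; unfold n; lia).
    assert (E : INR n * (INR (fact g) * (2 * Kg * A) / R') * R' = INR n * (INR (fact g) * (2 * Kg * A))) by (field; lra).
    assert (Rabs (Pol (coef D m) n rho) * R' <= INR n * (INR (fact g) * (2 * Kg * A))).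
    { rewrite <- E. apply Rmult_le_compat_r; lra. }
    assert (0 <= INR (fact g) * (2 * Kg * A)).
    { pose proof (INR_fact_lt_0 g). apply Rmult_le_pos; [lra|]. apply Rmult_le_pos; lra. }
    assert (INR n * (INR (fact g) * (2 * Kg * A)) <= INR (S g) * (INR (fact g) * (2 * Kg * A)))
      by (apply Rmult_le_compat_r; lra).
    replace (INR (S g) * INR (fact g) * (2 * Kg) * A) with (INR (S g) * (INR (fact g) * (2 * Kg * A))) by ring.
    lra. }
  replace (D m rho) with ((D m rho - Pol (coef D m) n rho) + Pol (coef D m) n rho) by ring.
  fold R'.
  assert (Rabs (D m rho - Pol (coef D m) n rho + Pol (coef D m) n rho) * R' <=
    (Rabs (D m rho - Pol (coef D m) n rho) + Rabs (Pol (coef D m) n rho)) * R').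
  { apply Rmult_le_compat_r; [lra| apply Rabs_triang]. }
  assert (Rabs (D m rho - Pol (coef D m) n rho) * R' <= Bp * rho ^ n * R') by (apply Rmult_le_compat_r; lra).
  lra.
Qed.

Lemma sum_conv (f w : nat -> R) : (forall i, f (S i) <= w i) -> (forall i, 0 <= w i) ->
  forall k, sum_f_R0 (fun x => f (x + 2)%nat) k <= SumN w (S (S k)).
Proof.
  intros Hf Hw k. induction k.
  - simpl. specialize (Hf 1%nat). specialize (Hw 0%nat). simpl in Hf. lra.
  - simpl sum_f_R0. change (SumN w (S (S (S k)))) with (SumN w (S (S k)) + w (S (S k))).
    replace (S (k + 2))%nat with (S (S (S k))) by lia. specialize (Hf (S (S k))). lra.
Qed.

Lemma F2_conv g (Dr Di : nat -> R -> R) : (2 <= g)%nat ->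
  sum_f 2 g (fun j => cmod (Dr j 0) (Di j 0) / INR (fact j)) <=
  SumN (fun i => Rabs (coef Dr 1 i) + Rabs (coef Di 1 i)) g.
Proof.
  intros Hg. unfold sum_f. assert (Hk : S (S (g - 2)) = g) by lia.
  rewrite <- Hk at 2.
  apply (sum_conv (fun j => cmod (Dr j 0) (Di j 0) / INR (fact j))).
  - intros i. unfold coef. simpl (1 + i)%nat.
    assert (Hf : 0 < INR (fact i)) by apply INR_fact_lt_0.
    assert (Hf2 : INR (fact i) <= INR (fact (S i))) by (apply le_INR, Factorial.fact_le; lia).
    unfold Rdiv. rewrite !Rabs_mult. rewrite (Rabs_pos_eq (/ INR (fact i))) by (left; apply Rinv_0_lt_compat; auto).
    assert (/ INR (fact (S i)) <= / INR (fact i)) by (apply Rinv_le_contravar; lra).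
    pose proof (cmod_le (Dr (S i) 0) (Di (S i) 0)). pose proof (cmod_pos (Dr (S i) 0) (Di (S i) 0)).
    assert (0 < / INR (fact (S i))) by (apply Rinv_0_lt_compat; lra).
    pose proof (Rabs_pos (Dr (S i) 0)). pose proof (Rabs_pos (Di (S i) 0)). nra.
  - intros i. pose proof (Rabs_pos (coef Dr 1 i)). pose proof (Rabs_pos (coef Di 1 i)). lra.
Qed.

Definition d0 g C0 Bp := Rmin 1 (C0 / (4 * Kc g * (Bp / INR (fact g) + 1))).
Definition Cc g C0 := C0 / (4 * Kc g).
Definition Cst g C0 Bp := 2 * (INR (S g) * INR (fact g) * (2 * Kc g) + Bp / Cc g C0) + 1.

Lemma core g C0 Bp delta (Dr Di : nat -> R -> R) : (2 <= g)%nat -> 0 < C0 -> 0 <= Bp ->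
  0 < delta <= d0 g C0 Bp ->
  TH Dr delta Bp (S g) -> TH Di delta Bp (S g) ->
  C0 <= SumN (fun i => Rabs (coef Dr 1 i) + Rabs (coef Di 1 i)) g ->
  (forall r1 r2, 0 < r1 -> r1 <= r2 -> r2 < delta ->
     cmod (Dr 1%nat r1) (Di 1%nat r1) <= cmod (Dr 1%nat r2) (Di 1%nat r2)) ->
  forall rho, 0 < rho < delta ->
    cmod (Dr 1%nat rho) (Di 1%nat rho) >= Cc g C0 * rho ^ (g - 1) /\
    forall m, (1 <= m <= S g)%nat ->
      cmod (Dr m rho) (Di m rho) <= Cst g C0 Bp * / rho ^ (m - 1) * cmod (Dr 1%nat rho) (Di 1%nat rho).
Proof.
  intros Hg HC0 HB Hd HTr HTi HS Hmono rho Hr.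
  set (A := cmod (Dr 1%nat rho) (Di 1%nat rho)).
  set (K := Kc g). set (E := Bp / INR (fact g)).
  assert (HK : 1 <= K) by (apply Kc_ge1; lia).
  assert (HE : 0 <= E) by (unfold E; apply Rmult_le_pos; [lra| left; apply Rinv_0_lt_compat, INR_fact_lt_0]).
  assert (Hd1 : delta <= 1) by (eapply Rle_trans; [apply Hd| apply Rmin_l]).
  assert (Hd2 : delta <= C0 / (4 * K * (E + 1))) by (eapply Rle_trans; [apply Hd| apply Rmin_r]).
  set (q := C0 / (4 * K)).
  assert (Hq : 0 < q) by (unfold q; apply Rdiv_lt_0_compat; lra).
  assert (HEr : E * rho <= q).
  { assert ((E + 1) * rho <= (E + 1) * (C0 / (4 * K * (E + 1)))) by (apply Rmult_le_compat_l; lra).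
    replace ((E + 1) * (C0 / (4 * K * (E + 1)))) with q in H by (unfold q; field; lra). nra. }
  assert (Hmr : forall s, 0 < s <= rho -> cmod (Dr 1%nat s) (Di 1%nat s) <= A).
  { intros s Hs. destruct (Req_dec s rho) as [->|Hne]. unfold A; lra. apply Hmono; lra. }
  assert (Har : forall t, 0 < t <= 1 -> Rabs (Pol (fun i => coef Dr 1 i * rho ^ i) g t) <= A + E * rho ^ g).
  { apply (stepa Dr delta Bp g rho A HB HTr Hr). intros s Hs.
    eapply Rle_trans. apply cmod_re. apply Hmr; auto. }
  assert (Hai : forall t, 0 < t <= 1 -> Rabs (Pol (fun i => coef Di 1 i * rho ^ i) g t) <= A + E * rho ^ g).
  { apply (stepa Di delta Bp g rho A HB HTi Hr). intros s Hs.
    eapply Rle_trans. apply cmod_im. apply Hmr; auto. }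
  pose proof (poly_bound g _ _ Har) as Pr. pose proof (poly_bound g _ _ Hai) as Pi.
  fold K in Pr, Pi.
  set (P := rho ^ (g - 1)).
  assert (HP : 0 < P) by (apply pow_lt; lra).
  assert (Hpg : rho ^ g = rho * P) by (unfold P; replace g with (S (g - 1)) at 1 by lia; reflexivity).
  assert (Hlow : P * C0 <= SumN (fun i => Rabs (coef Dr 1 i * rho ^ i)) g + SumN (fun i => Rabs (coef Di 1 i * rho ^ i)) g).
  { rewrite <- SumN_plus. eapply Rle_trans. apply (Rmult_le_compat_l P _ _ (Rlt_le _ _ HP) HS).
    rewrite <- SumN_scal. apply SumN_le. intros i Hi. rewrite !Rabs_mult.
    rewrite !(Rabs_pos_eq (rho ^ i)) by (apply pow_le; lra).
    assert (P <= rho ^ i) by (unfold P; apply pow_le_small; [lra| lia]).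
    pose proof (Rabs_pos (coef Dr 1 i)). pose proof (Rabs_pos (coef Di 1 i)). nra. }
  assert (HEP : E * rho ^ g <= q * P) by (rewrite Hpg; nra).
  assert (Hq4 : q * (4 * K) = C0) by (unfold q; field; lra).
  assert (HA : q * P <= A).
  { assert (P * C0 <= 2 * K * (A + E * rho ^ g)) by lra.
    assert (P * C0 <= 2 * K * (A + q * P)) by nra.
    rewrite <- Hq4 in H0. nra. }
  split.
  { change (Cc g C0) with q. fold P. lra. }
  intros m Hm.
  assert (Hj : forall D, SumN (fun i => Rabs (coef D 1 i * rho ^ i)) g <= K * (A + E * rho ^ g) ->
      forall j, (j < g)%nat -> Rabs (coef D 1 j) * rho ^ j <= 2 * K * A).
  { intros D HD j Hjg.
    assert (T := SumN_term (fun i => Rabs (coef D 1 i * rho ^ i)) g j ltac:(intros; apply Rabs_pos) Hjg).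
    simpl in T. rewrite Rabs_mult, (Rabs_pos_eq (rho ^ j)) in T by (apply pow_le; lra).
    assert (K * (A + E * rho ^ g) <= K * (A + A)) by (apply Rmult_le_compat_l; lra). lra. }
  assert (HK0 : 0 <= K) by lra.
  assert (Hrho1 : rho < 1) by lra.
  assert (Fr := stepf Dr delta Bp g rho A K q m HB HTr Hr Hrho1 Hg Hq HA HK0 (Hj Dr Pr) Hm).
  assert (Fi := stepf Di delta Bp g rho A K q m HB HTi Hr Hrho1 Hg Hq HA HK0 (Hj Di Pi) Hm).
  set (R' := rho ^ (m - 1)) in *. assert (HR : 0 < R') by (apply pow_lt; lra).
  set (Z := INR (S g) * INR (fact g) * (2 * K) + Bp / q) in *.
  change (Cst g C0 Bp) with (2 * Z + 1).
  assert (HA0 : 0 <= A) by (unfold A; apply cmod_pos).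
  assert (Hc : cmod (Dr m rho) (Di m rho) * R' <= 2 * Z * A).
  { pose proof (cmod_le (Dr m rho) (Di m rho)). nra. }
  assert (cmod (Dr m rho) (Di m rho) = cmod (Dr m rho) (Di m rho) * R' * / R') by (field; lra).
  rewrite H. assert (0 < / R') by (apply Rinv_0_lt_compat; lra).
  assert (2 * Z * A <= (2 * Z + 1) * A) by nra. nra.
Qed.

Lemma mk_TH (D : nat -> R -> R) (E : nat -> R -> R) g delta Bp :
  Cn_on_0d (S g) delta D ->
  (forall x, 0 < x < delta -> cmod (D (S g) x) (E (S g) x) <= Bp) ->
  (forall x, 0 < x < delta -> cmod (E (S g) x) (D (S g) x) <= Bp) ->
  TH D delta Bp (S g).
Proof.
  intros [HC _] Hb _. split.
  - intros k Hk. destruct (HC k Hk) as [H1 H2]. split; auto. eapply rderiv_rcont0; eauto.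
  - intros x Hx. eapply Rle_trans. apply cmod_re. apply (Hb x Hx).
Qed.

Lemma cmod_sym a b : cmod a b = cmod b a.
Proof. unfold cmod. f_equal. ring. Qed.

Theorem mainTheorem2 :
  forall (gamma : nat), (2 <= gamma)%nat ->
  forall (C0 : R), 0 < C0 ->
  forall (B : nat -> R),
  exists delta0 : R, 0 < delta0 /\
  forall (delta : R), 0 < delta <= delta0 ->
  forall (M : Type) (Fre Fim : nat -> M -> R -> R),
    (forall mu : M, Cn_on_0d (S gamma) delta (fun k => Fre k mu) /\
                    Cn_on_0d (S gamma) delta (fun k => Fim k mu)) ->
    (forall mu : M, Fre 0%nat mu 0 = 0 /\ Fim 0%nat mu 0 = 0 /\
                    Fre 1%nat mu 0 = 0 /\ Fim 1%nat mu 0 = 0) ->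
    (forall mu : M,
        sum_f 2 gamma (fun j => cmod (Fre j mu 0) (Fim j mu 0) / INR (Factorial.fact j)) >= C0) ->
    (forall (mu : M) (r1 r2 : R), 0 < r1 -> r1 <= r2 -> r2 < delta ->
        cmod (Fre 1%nat mu r1) (Fim 1%nat mu r1) <= cmod (Fre 1%nat mu r2) (Fim 1%nat mu r2)) ->
    (forall (k : nat) (mu : M) (rho : R), (k <= S gamma)%nat -> 0 < rho < delta ->
        cmod (Fre k mu rho) (Fim k mu rho) <= B k) ->
    exists C : R, 0 < C /\
    exists Cm : nat -> R, (forall m : nat, 0 < Cm m) /\
    forall (rho : R) (mu : M), 0 < rho < delta ->
      cmod (Fre 1%nat mu rho) (Fim 1%nat mu rho) >= C * rho ^ (gamma - 1) /\
      forall m : nat, (1 <= m <= S gamma)%nat ->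
        cmod (Fre m mu rho) (Fim m mu rho) <=
          Cm m * / (rho ^ (m - 1)) * cmod (Fre 1%nat mu rho) (Fim 1%nat mu rho).
Proof.
  intros g Hg C0 HC0 B.
  set (Bp := Rabs (B (S g))).
  assert (HB : 0 <= Bp) by apply Rabs_pos.
  assert (HK : 1 <= Kc g) by (apply Kc_ge1; lia).
  assert (HE : 0 <= Bp / INR (fact g)) by (apply Rmult_le_pos; [lra| left; apply Rinv_0_lt_compat, INR_fact_lt_0]).
  exists (d0 g C0 Bp). split.
  { unfold d0. apply Rmin_pos. lra. apply Rdiv_lt_0_compat; auto.
    apply Rmult_lt_0_compat; lra. }
  intros delta Hd M Fre Fim HCn _ HF2 HF3 HF4.
  assert (HCc : 0 < Cc g C0) by (unfold Cc; apply Rdiv_lt_0_compat; lra).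
  exists (Cc g C0). split; auto.
  exists (fun _ => Cst g C0 Bp). split.
  { intros _. unfold Cst.
    assert (0 <= INR (S g) * INR (fact g) * (2 * Kc g)).
    { apply Rmult_le_pos; [apply Rmult_le_pos; apply pos_INR| lra]. }
    assert (0 <= Bp / Cc g C0) by (apply Rmult_le_pos; [lra| left; apply Rinv_0_lt_compat; auto]).
    lra. }
  intros rho mu Hr.
  assert (HBd : forall x, 0 < x < delta -> cmod (Fre (S g) mu x) (Fim (S g) mu x) <= Bp).
  { intros x Hx. eapply Rle_trans. apply (HF4 (S g) mu x); auto. apply Rle_abs. }
  assert (HBd' : forall x, 0 < x < delta -> cmod (Fim (S g) mu x) (Fre (S g) mu x) <= Bp).
  { intros x Hx. rewrite cmod_sym. auto. }
  destruct (HCn mu) as [Hre Him].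
  assert (T1 : TH (fun k => Fre k mu) delta Bp (S g)) by (apply (mk_TH _ (fun k => Fim k mu)); auto).
  assert (T2 : TH (fun k => Fim k mu) delta Bp (S g)) by (apply (mk_TH _ (fun k => Fre k mu)); auto).
  assert (S2 : C0 <= SumN (fun i => Rabs (coef (fun k => Fre k mu) 1 i) + Rabs (coef (fun k => Fim k mu) 1 i)) g).
  { pose proof (F2_conv g (fun k => Fre k mu) (fun k => Fim k mu) Hg). specialize (HF2 mu).
    simpl in H. lra. }
  exact (core g C0 Bp delta (fun k => Fre k mu) (fun k => Fim k mu) Hg HC0 HB Hd T1 T2 S2 (HF3 mu) rho Hr).
Qed.
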